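(* Assume $f:\mathbb{R}^n\to\mathbb{R}$ is convex with bounded level sets, and there exist $M_1,M_2>0$ such that $\|v\|\le M_1\|x\|+M_2$ for all $x\in\mathbb{R}^n$ and all $v\in\partial f(x)$. Let $\gamma_k,\delta_k,s_k>0$ for all $k$. Let $B>0$ be such that $\|x^*\|\le B$ and $\|v\|\le B$ for all $x^*\in X^*$ and all $v\in\partial f(x^* )$, and let $\rho\in[0,1]$ be arbitrary. Then the iterates of the random incremental penalty method surely satisfy, for all $x^*\in X^*$ and $k\ge1$, $$\begin{aligned}\|x_{k+1}-x^*\|^2\le{}&(1+4s_k^2M_1^2)\|x_k-x^*\|^2+2s_k\big((1-\rho)B+\rho(M_1B+M_2)\big)\mathrm{dist}(x_k,X)\\&+2s_k\rho\big(f^*-f(\Pi_X[x_k])\big)+2s_k\rho M_1\|x_k-x^*\|\,\mathrm{dist}(x_k,X)\\&+\frac{s_k\gamma_k\delta_k}{2\alpha_{\min}}-2s_k\gamma_k\,\mathrm{dist}(x_k,X_{i_k})+4s_k^2\big(M_1^2B^2+M_2^2+\gamma_k^2\big).\end{aligned}$$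
   Context: Let $a_1,\dots,a_m\in\mathbb{R}^n$ be nonzero vectors and $b_1,\dots,b_m\in\mathbb{R}$; $X_i=\{x:\langle a_i,x\rangle-b_i\le0\}$, $X=\bigcap_{i=1}^mX_i$ (assumed nonempty), $\alpha_{\min}=\min_i\|a_i\|$; $\Pi_X$ is the Euclidean projection onto $X$. $X^*$ and $f^*$ are the solution set and optimal value of $\min_{x\in X}f(x)$. For $\delta>0$, nonzero $a$ and scalar $b$: $h_\delta(x;a,b)=\frac{\langle a,x\rangle-b}{\|a\|}$ if $\langle a,x\rangle-b>\delta$, $\frac{(\langle a,x\rangle-b+\delta)^2}{4\delta\|a\|}$ if $-\delta\le\langle a,x\rangle-b\le\delta$, $0$ if $\langle a,x\rangle-b<-\delta$; its gradient is $\nabla h_\delta(x;a,b)=\frac{1}{\|a\|}p'_\delta(\langle a,x\rangle-b)\,a$ with $p'_\delta(s)=1$ for $s>\delta$, $\frac{s+\delta}{2\delta}$ for $|s|\le\delta$, $0$ for $s<-\delta$. Random incremental penalty method: from an initial point $x_1$, for $k\ge1$, $x_{k+1}=x_k-s_k\big[\tilde\nabla f(x_k)+\gamma_k\nabla h_{\delta_k}(x_k;a_{i_k},b_{i_k})\big]$, where $\tilde\nabla f(x_k)\in\partial f(x_k)$ and $i_k\in\{1,\dots,m\}$ is chosen uniformly at random. *)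

(* Defs.v *)
From HB Require Import structures.
From mathcomp Require Import all_boot all_order all_algebra.
From mathcomp Require Import boolp classical_sets reals.
Set Implicit Arguments. Unset Strict Implicit. Unset Printing Implicit Defensive.
Import Order.TTheory GRing.Theory Num.Theory.
Local Open Scope ring_scope.
Local Open Scope classical_set_scope.

Section Defs.
Variables (R : realType) (n : nat).
Notation vec := 'rV[R]_n.

Definition dot (x y : vec) : R := \sum_(j < n) x ord0 j * y ord0 j.
Definition vnorm (x : vec) : R := Num.sqrt (dot x x).

Definition convex_fun (f : vec -> R) : Prop :=
  forall (x y : vec) (t : R), 0 <= t -> t <= 1 ->
    f (t *: x + (1 - t) *: y) <= t * f x + (1 - t) * f y.

Definition bounded_level_sets (f : vec -> R) : Prop :=
  forall c : R, exists r : R, forall x, f x <= c -> vnorm x <= r.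

Definition subdiff (f : vec -> R) (x : vec) : set vec :=
  [set v | forall y, f x + dot v (y - x) <= f y].

Definition dist (x : vec) (S : set vec) : R := inf [set vnorm (x - y) | y in S].

(* Euclidean projection onto S (a nearest point of S; unique for closed convex S) *)
Definition proj (S : set vec) (x : vec) : vec :=
  xget 0 [set p | S p /\ forall y, S y -> vnorm (x - p) <= vnorm (x - y)].

Definition halfspace (a : vec) (b : R) : set vec := [set x | dot a x - b <= 0].
Definition polyhedron (m : nat) (a : 'I_m -> vec) (b : 'I_m -> R) : set vec :=
  [set x | forall i, halfspace (a i) (b i) x].
Definition alpha_min (m : nat) (a : 'I_m -> vec) : R :=
  inf [set vnorm (a i) | i in [set: 'I_m]].

Definition fstar (f : vec -> R) (X : set vec) : R := inf [set f x | x in X].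
Definition Xstar (f : vec -> R) (X : set vec) : set vec :=
  [set x | X x /\ f x = fstar f X].

(* derivative of the smoothed penalty and gradient of h_delta *)
Definition pdelta' (delta s : R) : R :=
  if delta < s then 1 else if s < - delta then 0 else (s + delta) / (2 * delta).
Definition grad_h (delta : R) (a : vec) (b : R) (x : vec) : vec :=
  ((vnorm a)^-1 * pdelta' delta (dot a x - b)) *: a.

End Defs.

(* Main.v *)
Require Import Defs.
From HB Require Import structures.
From mathcomp Require Import all_boot all_order all_algebra.
From mathcomp Require Import boolp classical_sets reals.
From mathcomp Require Import ring lra.
Import Order.TTheory GRing.Theory Num.Theory.
Local Open Scope ring_scope.
Local Open Scope classical_set_scope.
Set Implicit Arguments. Unset Strict Implicit. Unset Printing Implicit Defensive.

Section Basic.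
Variables (R : realType) (n : nat).
Notation vec := 'rV[R]_n.
Implicit Types (x y z : vec).

Lemma dotC x y : dot x y = dot y x.
Proof. by apply: eq_bigr => j _; rewrite mulrC. Qed.
Lemma dotDl x y z : dot (x + y) z = dot x z + dot y z.
Proof. by rewrite /dot -big_split; apply: eq_bigr => j _; rewrite mxE mulrDl. Qed.
Lemma dotZl k x z : dot (k *: x) z = k * dot x z.
Proof. by rewrite /dot mulr_sumr; apply: eq_bigr => j _; rewrite mxE mulrA. Qed.
Lemma dotNl x z : dot (- x) z = - dot x z.
Proof. by rewrite -scaleN1r dotZl mulN1r. Qed.
Lemma dotBl x y z : dot (x - y) z = dot x z - dot y z.
Proof. by rewrite dotDl dotNl. Qed.
Lemma dotDr x y z : dot z (x + y) = dot z x + dot z y.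
Proof. by rewrite dotC dotDl !(dotC z). Qed.
Lemma dotZr k x z : dot z (k *: x) = k * dot z x.
Proof. by rewrite dotC dotZl dotC. Qed.
Lemma dotBr x y z : dot z (x - y) = dot z x - dot z y.
Proof. by rewrite dotC dotBl !(dotC z). Qed.
Lemma dotNr x z : dot z (- x) = - dot z x.
Proof. by rewrite dotC dotNl dotC. Qed.
Lemma dot0l z : dot 0 z = 0.
Proof. by rewrite -(scale0r 0) dotZl mul0r. Qed.
Lemma dot_ge0 x : 0 <= dot x x.
Proof. by apply: sumr_ge0 => j _; rewrite -expr2 sqr_ge0. Qed.
Lemma dot_eq0 x : dot x x = 0 -> x = 0.
Proof.
move=> /eqP; rewrite psumr_eq0 => [/allP H|j _]; last by rewrite -expr2 sqr_ge0.
apply/rowP => j; rewrite mxE.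
have := H j (mem_index_enum _); rewrite /= -expr2 sqrf_eq0 => /eqP.
by [].
Qed.
Lemma vnorm_ge0 x : 0 <= vnorm x.
Proof. exact: sqrtr_ge0. Qed.
Lemma vnorm_sq x : vnorm x ^+ 2 = dot x x.
Proof. by rewrite sqr_sqrtr // dot_ge0. Qed.
Lemma le_sq (a c : R) : 0 <= c -> a ^+ 2 <= c ^+ 2 -> a <= c.
Proof. move=> c0 h; nra. Qed.
Lemma vnorm_le x y : dot x x <= dot y y -> vnorm x <= vnorm y.
Proof. by move=> h; rewrite /vnorm ler_sqrt // dot_ge0. Qed.
Lemma dot_sq_le x y : dot x y ^+ 2 <= dot x x * dot y y.
Proof.
have [/dot_eq0 ->|yy0] := eqVneq (dot y y) 0.
  by rewrite dotC dot0l expr0n /= dot0l mulr0.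
have ypos : 0 < dot y y by rewrite lt0r yy0 dot_ge0.
have := dot_ge0 (dot y y *: x - dot x y *: y).
rewrite !(dotBl, dotBr, dotZl, dotZr) (dotC y x) => h.
have : 0 <= dot y y * (dot y y * dot x x - dot x y ^+ 2) by rewrite -[X in _ <= X]subr0; nra.
by rewrite pmulr_rge0 // subr_ge0 mulrC.
Qed.
Lemma cauchy_schwarz x y : dot x y <= vnorm x * vnorm y.
Proof.
apply: le_sq; first by rewrite mulr_ge0 ?vnorm_ge0.
by rewrite exprMn !vnorm_sq dot_sq_le.
Qed.
Lemma vnorm_triangle x y : vnorm (x + y) <= vnorm x + vnorm y.
Proof.
apply: le_sq; first by rewrite addr_ge0 ?vnorm_ge0.
have := cauchy_schwarz x y.
rewrite vnorm_sq !(dotDl, dotDr) sqrrD !vnorm_sq (dotC y x); lra.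
Qed.
Lemma vnormZ k x : vnorm (k *: x) = `|k| * vnorm x.
Proof. by rewrite /vnorm dotZl dotZr mulrA -expr2 sqrtrM ?sqr_ge0 // sqrtr_sqr. Qed.
Lemma vnormN x : vnorm (- x) = vnorm x.
Proof. by rewrite -scaleN1r vnormZ normrN normr1 mul1r. Qed.
Lemma vnormB x y : vnorm (x - y) = vnorm (y - x).
Proof. by rewrite -vnormN opprB. Qed.
Lemma vnorm_gt0 x : x != 0 -> 0 < vnorm x.
Proof.
move=> x0; rewrite /vnorm sqrtr_gt0 lt0r dot_ge0 andbT.
by apply: contra x0 => /eqP /dot_eq0 ->.
Qed.
End Basic.
Section HB.
Variables (R : realType) (n : nat).
Notation vec := 'rV[R]_n.
Implicit Types (x y z : vec).

Definition sublin (q : vec -> R) :=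
  (forall x y, q (x + y) <= q x + q y) /\ (forall k x, 0 < k -> q (k *: x) <= k * q x).
Definition affine_along (q : vec -> R) d c := forall y s, q (y + s *: d) = q y + s * c.

Lemma sublin0 q : sublin q -> q 0 = 0.
Proof.
move=> [hs hh]; have h1 := hs 0 0; rewrite addr0 in h1.
have h2 := hh (2^-1) 0 ltac:(by rewrite invr_gt0); rewrite scaler0 in h2.
apply/eqP; rewrite eq_le; apply/andP; split; lra.
Qed.

Lemma sublin_hom q k x : sublin q -> 0 < k -> q (k *: x) = k * q x.
Proof.
move=> [hs hh] k0; apply/eqP; rewrite eq_le hh //=.
have := hh k^-1 (k *: x) ltac:(by rewrite invr_gt0).
rewrite scalerA mulVf ?gt_eqF // scale1r => h.
by rewrite -(ler_pM2l k0) mulrA mulfV ?gt_eqF // mul1r in h.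
Qed.

Definition ext (q : vec -> R) e c y := inf [set q (y + t *: e) - t * c | t in [set: R]].

Section Ext.
Variables (q : vec -> R) (e : vec) (c : R).
Hypothesis hq : sublin q.
Hypothesis hc1 : 0 <= c + q (- e).
Hypothesis hc2 : c <= q e.

Lemma ext_lb y t : - q (- y) <= q (y + t *: e) - t * c.
Proof.
have h0 := sublin0 hq; have [hs _] := hq.
have h1 : q (t *: e) <= q (y + t *: e) + q (- y).
  by have := hs (y + t *: e) (- y); rewrite addrC addKr.
have h2 : t * c <= q (t *: e).
  have [t0|t0|->] := ltrgtP t 0.
  - have -> : t *: e = (- t) *: (- e) by rewrite scalerN scaleNr opprK.
    rewrite sublin_hom // ?oppr_gt0 //. have := hc1. move: (q (- e)) => a ha. nra.
  - rewrite sublin_hom //. have := hc2. move: (q e) => a ha. nra.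
  - by rewrite mul0r scale0r h0.
lra.
Qed.

Lemma ext_le y t : ext q e c y <= q (y + t *: e) - t * c.
Proof.
apply: ge_inf; last by exists t.
by exists (- q (- y)) => _ [s _ <-]; apply: ext_lb.
Qed.

Lemma ext_ge y (z : R) : (forall t, z <= q (y + t *: e) - t * c) -> z <= ext q e c y.
Proof.
move=> h; apply: lb_le_inf; first by exists (q (y + 0 *: e) - 0 * c); exists 0.
by move=> _ [t _ <-].
Qed.

Lemma ext_leq y : ext q e c y <= q y.
Proof. by have := ext_le y 0; rewrite scale0r addr0 mul0r subr0. Qed.

Lemma ext_sublin : sublin (ext q e c).
Proof.
have [hs hh] := hq; split.
  move=> x y.
  have H : forall t1 t2, ext q e c (x + y) <= (q (x + t1 *: e) - t1 * c) + (q (y + t2 *: e) - t2 * c).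
    move=> t1 t2; apply: le_trans (ext_le (x + y) (t1 + t2)) _.
    have := hs (x + t1 *: e) (y + t2 *: e).
    have -> : x + t1 *: e + (y + t2 *: e) = x + y + (t1 + t2) *: e.
      by rewrite scalerDl addrACA.
    by rewrite addrACA -opprD -mulrDl lerD2r.
  rewrite -lerBlDr; apply: ext_ge => t1; rewrite lerBlDl -lerBlDr.
  by apply: ext_ge => t2; rewrite lerBlDl.
move=> k x k0; rewrite mulrC -ler_pdivrMr //; apply: ext_ge => t.
rewrite ler_pdivrMr //; apply: le_trans (ext_le _ (k * t)) _.
have := hh k (x + t *: e) k0; rewrite scalerDr scalerA.
move: (q (k *: x + (k * t) *: e)) (q (x + t *: e)) => A B h; nra.
Qed.

Lemma ext_aff_le y s : ext q e c (y + s *: e) <= ext q e c y + s * c.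
Proof.
rewrite -lerBlDr; apply: ext_ge => t; rewrite lerBlDr.
apply: le_trans (ext_le _ (t - s)) _.
rewrite -addrA -scalerDl [s + _]addrC subrK; move: (q _) => A; lra.
Qed.

Lemma ext_aff : affine_along (ext q e c) e c.
Proof.
move=> y s; apply/eqP; rewrite eq_le ext_aff_le /=.
have := ext_aff_le (y + s *: e) (- s).
rewrite -addrA -scalerDl subrr scale0r addr0; lra.
Qed.

Lemma ext_aff_keep_le d c' y s : affine_along q d c' ->
  ext q e c (y + s *: d) <= ext q e c y + s * c'.
Proof.
move=> hd; rewrite -lerBlDr; apply: ext_ge => t; rewrite lerBlDr.
apply: le_trans (ext_le _ t) _.
by rewrite addrAC hd; lra.
Qed.

Lemma ext_aff_keep d c' : affine_along q d c' -> affine_along (ext q e c) d c'.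
Proof.
move=> hd y s; apply/eqP; rewrite eq_le ext_aff_keep_le //=.
have := ext_aff_keep_le (y + s *: d) (- s) hd.
rewrite -addrA -scalerDl subrr scale0r addr0; lra.
Qed.
End Ext.

Lemma hahn_banach q w : sublin q ->
  exists v, (forall y, dot v y <= q y) /\ q w <= dot v w.
Proof.
move=> hq.
have hstep : forall q', sublin q' -> forall e, 0 <= q' e + q' (- e).
  move=> q' hq' e; have [hs _] := hq'; have := hs e (- e).
  by rewrite subrr (sublin0 hq'); lra.
have key : forall r : seq 'I_n, exists q', [/\ sublin q', (forall y, q' y <= q y),
    affine_along q' w (q w) &
    exists c : 'I_n -> R, forall j, j \in r -> affine_along q' (delta_mx 0 j) (c j)].
  elim=> [|j r [q' [hq' hle hw [c hc]]]].
    exists (ext q w (q w)); split.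
    - by apply: ext_sublin => //; apply: hstep.
    - by move=> y; apply: ext_leq => //; apply: hstep.
    - by apply: ext_aff => //; apply: hstep.
    - by exists (fun _ => 0).
  pose e := delta_mx 0 j : vec.
  exists (ext q' e (q' e)); split.
  - by apply: ext_sublin => //; apply: hstep.
  - by move=> y; apply: le_trans (hle y); apply: ext_leq => //; apply: hstep.
  - by apply: ext_aff_keep => //; apply: hstep.
  - exists (fun i => if i == j then q' e else c i) => i; rewrite inE.
    case: eqP => [-> _|_ /= ir]; first by apply: ext_aff => //; apply: hstep.
    by apply: ext_aff_keep => //; [apply: hstep | apply: hc].
have [q' [hq' hle hw [c hc]]] := key (enum 'I_n).
have hc' : forall j, affine_along q' (delta_mx 0 j) (c j).
  by move=> j; apply: hc; rewrite mem_enum.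
have hlin : forall y, q' y = dot (\row_j c j) y.
  move=> y.
  have H : forall r : seq 'I_n,
      q' (\sum_(j <- r) y 0 j *: (delta_mx 0 j : vec)) = \sum_(j <- r) y 0 j * c j.
    elim => [|j r IH]; first by rewrite !big_nil (sublin0 hq').
    by rewrite !big_cons addrC hc' IH addrC.
  rewrite {1}(row_sum_delta y) H /dot; apply: eq_bigr => j _.
  by rewrite mxE mulrC.
exists (\row_j c j); split.
  by move=> y; rewrite -hlin.
by rewrite -hlin; have := hw 0 1; rewrite add0r scale1r (sublin0 hq') add0r mul1r => ->.
Qed.
End HB.

Section Subgrad.
Variables (R : realType) (n : nat).
Notation vec := 'rV[R]_n.
Implicit Types (x y z w : vec).
Variable f : vec -> R.
Hypothesis fconv : convex_fun f.

Definition Qd z w (t : R) := (f (z + t *: w) - f z) / t.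
Definition dd z w := inf [set Qd z w t | t in [set t : R | 0 < t]].

Lemma comb_id z w (t1 t2 : R) : 0 < t2 ->
  (t1 / t2) *: (z + t2 *: w) + (1 - t1 / t2) *: z = z + t1 *: w.
Proof.
move=> t20; rewrite scalerDr scalerA divfK ?gt_eqF // addrAC -scalerDl.
by rewrite [t1 / t2 + _]addrC subrK scale1r.
Qed.

Lemma Qd_mono z w (t1 t2 : R) : 0 < t1 -> t1 <= t2 -> Qd z w t1 <= Qd z w t2.
Proof.
move=> t10 t12; have t20 : 0 < t2 by apply: lt_le_trans t12.
have l0 : 0 <= t1 / t2 by rewrite divr_ge0 // ltW.
have l1 : t1 / t2 <= 1 by rewrite ler_pdivrMr // mul1r.
have := fconv (z + t2 *: w) z l0 l1; rewrite comb_id //.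
rewrite /Qd ler_pdivrMr // => h.
have -> : (f (z + t2 *: w) - f z) / t2 * t1 = t1 / t2 * (f (z + t2 *: w) - f z).
  by ring.
move: h; move: (f (z + t1 *: w)) (f (z + t2 *: w)) (f z) (t1 / t2) => A B C l h; nra.
Qed.

Lemma Qd_lb z w (t : R) : 0 < t -> f z - f (z - w) <= Qd z w t.
Proof.
move=> t0; have t10 : 0 < 1 + t by lra.
have l0 : 0 <= (1 + t)^-1 by rewrite invr_ge0 ltW.
have l1 : (1 + t)^-1 <= 1 by rewrite invf_le1 //; lra.
have := fconv (z + t *: w) (z - w) l0 l1.
have -> : (1 + t)^-1 *: (z + t *: w) + (1 - (1 + t)^-1) *: (z - w) = z.
  by apply/rowP => j; rewrite !mxE; field; lra.
rewrite /Qd ler_pdivlMr //.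
have -> : 1 - (1 + t)^-1 = t / (1 + t) by field; lra.
move: (f z) (f (z + t *: w)) (f (z - w)) => A B C h.
have h2 := ler_wpM2l (ltW t10) h.
have e : (1 + t) * ((1 + t)^-1 * B + t / (1 + t) * C) = B + t * C by field; lra.
rewrite e in h2; nra.
Qed.

Lemma dd_le z w (t : R) : 0 < t -> dd z w <= Qd z w t.
Proof.
move=> t0; apply: ge_inf; last by exists t.
by exists (f z - f (z - w)) => _ [s s0 <-]; apply: Qd_lb.
Qed.

Lemma dd_ge z w (u : R) : (forall t, 0 < t -> u <= Qd z w t) -> u <= dd z w.
Proof.
move=> h; apply: lb_le_inf; first by exists (Qd z w 1); exists 1 => //=.
by move=> _ [t t0 <-]; apply: h.
Qed.

Lemma dd_sublin z : sublin (dd z).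
Proof.
split.
  move=> u v.
  have H1 : forall t, 0 < t -> Qd z (u + v) t <= Qd z u (2 * t) + Qd z v (2 * t).
    move=> t t0; have h := fconv (z + (2 * t) *: u) (z + (2 * t) *: v)
        (ltac:(lra) : 0 <= 2^-1) (ltac:(lra) : 2^-1 <= 1).
    have e : 2^-1 *: (z + (2 * t) *: u) + (1 - 2^-1) *: (z + (2 * t) *: v)
        = z + t *: (u + v) by apply/rowP => j; rewrite !mxE; field.
    rewrite e in h; rewrite /Qd.
    move: h; move: (f (z + t *: (u + v))) (f (z + (2 * t) *: u))
      (f (z + (2 * t) *: v)) (f z) => A B C D h.
    have -> : (B - D) / (2 * t) + (C - D) / (2 * t) = ((2^-1 * B + (1 - 2^-1) * C) - D) / t.
      by field; lra.
    by apply: ler_wpM2r; [rewrite invr_ge0 ltW | lra].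
  have H2 : forall t1 t2, 0 < t1 -> 0 < t2 -> dd z (u + v) <= Qd z u t1 + Qd z v t2.
    move=> t1 t2 h1 h2; pose t := Num.min t1 t2 / 2.
    have m0 : 0 < Num.min t1 t2 by rewrite lt_min h1 h2.
    have t0 : 0 < t by rewrite /t divr_gt0.
    apply: le_trans (dd_le _ _ t0) _; apply: le_trans (H1 t t0) _.
    have -> : 2 * t = Num.min t1 t2 by rewrite /t; field.
    by apply: lerD; apply: Qd_mono => //; rewrite ge_min lexx ?orbT.
  rewrite -lerBlDr; apply: dd_ge => t1 h1; rewrite lerBlDl -lerBlDr.
  by apply: dd_ge => t2 h2; rewrite lerBlDl; apply: H2.
move=> k x k0; rewrite mulrC -ler_pdivrMr //; apply: dd_ge => s s0.
rewrite ler_pdivrMr //.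
have sk : 0 < s / k by rewrite divr_gt0.
apply: le_trans (dd_le _ _ sk) _.
rewrite /Qd scalerA divfK ?gt_eqF //.
move: (f (z + s *: x)) (f z) => A B.
have -> : (A - B) / (s / k) = (A - B) / s * k by field; apply/andP; split; rewrite gt_eqF.
by [].
Qed.

Lemma subgrad_exists z w : exists v, subdiff f z v /\ dd z w <= dot v w.
Proof.
have [v [h1 h2]] := hahn_banach w (dd_sublin z).
exists v; split => // y.
have := le_trans (h1 (y - z)) (dd_le z (y - z) (ltr01 : 0 < 1 :> R)).
by rewrite /Qd scale1r divr1 [z + _]addrC subrK -lerBrDl.
Qed.

Lemma dd_le1 z w : dd z w <= f (z + w) - f z.
Proof. by have := dd_le z w (ltr01 : 0 < 1 :> R); rewrite /Qd scale1r divr1. Qed.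
End Subgrad.

Section Proj.
Variables (R : realType) (n : nat).
Notation vec := 'rV[R]_n.
Implicit Types (x y z w : vec).

Lemma coord_sq_le x c : x 0 c ^+ 2 <= dot x x.
Proof.
rewrite /dot (bigD1 c) //= -expr2 lerDl.
by apply: sumr_ge0 => i _; rewrite -expr2 sqr_ge0.
Qed.

Lemma dot_bound (u v : vec) (rho : R) : (forall c, `|v 0 c| <= rho) ->
  dot u v <= rho * \sum_c `|u 0 c|.
Proof.
move=> h; rewrite /dot mulr_sumr; apply: ler_sum => c _.
apply: le_trans (ler_norm _) _; rewrite normrM mulrC.
by apply: ler_wpM2r => //; apply: h.
Qed.

Lemma arch_le0 (z K : R) : 0 <= K -> (forall j : nat, z <= K * (j.+1%:R)^-1) -> z <= 0.
Proof.
move=> K0 h; rewrite leNgt; apply/negP => z0.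
have [Ke|Kpos] := eqVneq K 0.
  by have := h 0%N; rewrite Ke mul0r; move/(lt_le_trans z0); rewrite ltxx.
have Kp : 0 < K by rewrite lt0r Kpos K0.
have [k hk] := ltr_add_invr (ltac:(by rewrite divr_gt0) : 0 < z / K).
rewrite add0r ltr_pdivlMr // in hk.
by have := h k; rewrite mulrC leNgt hk.
Qed.

Lemma abs_le_sq (u c : R) : 0 <= c -> u ^+ 2 <= c ^+ 2 -> `|u| <= c.
Proof. by move=> c0 h; rewrite ler_norml; apply/andP; split; nra. Qed.


Variables (m : nat) (a : 'I_m -> vec) (b : 'I_m -> R).
Notation X := (polyhedron a b).

Lemma poly_comb p q (t : R) : X p -> X q -> 0 <= t -> t <= 1 ->
  X ((1 - t) *: p + t *: q).
Proof.
move=> hp hq t0 t1 i; have := hp i; have := hq i; rewrite /halfspace /=.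
rewrite dotDr !dotZr; move: (dot (a i) p) (dot (a i) q) => A B h1 h2.
have : (1 - t) * (A - b i) <= 0 by apply: mulr_ge0_le0; lra.
have : t * (B - b i) <= 0 by apply: mulr_ge0_le0; lra.
lra.
Qed.

Lemma proj_exists x : (exists x0, X x0) ->
  exists p, X p /\ forall y, X y -> vnorm (x - p) <= vnorm (x - y).
Proof.
move=> [x0 hx0].
pose S := [set dot (x - y) (x - y) | y in X].
pose D2 := inf S.
have Sne : S !=set0 by exists (dot (x - x0) (x - x0)); exists x0.
have Slb : has_lbound S by exists 0 => _ [y _ <-]; apply: dot_ge0.
have D2le : forall y, X y -> D2 <= dot (x - y) (x - y).
  by move=> y hy; apply: ge_inf => //; exists y.
have D20 : 0 <= D2 by apply: lb_le_inf => // _ [y _ <-]; apply: dot_ge0.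
pose r (j : nat) : R := (j.+1%:R)^-1.
have r0 : forall j, 0 < r j by move=> j; rewrite invr_gt0 ltr0Sn.
have r1 : forall j, r j <= 1 by move=> j; rewrite invf_le1 ?ltr0Sn // ler1n.
have step1 : forall j, exists y, X y /\ dot (x - y) (x - y) < D2 + r j ^+ 2 / 2.
  move=> j; have : inf S < D2 + r j ^+ 2 / 2.
    by rewrite -/D2 ltrDl divr_gt0 // exprn_gt0.
  by move=> /(inf_lt Sne) [_ [y hy <-] hlt]; exists y.
have [Y hY] := choice step1.
have par : forall i j, dot (Y i - Y j) (Y i - Y j) <= r i ^+ 2 + r j ^+ 2.
  move=> i j; have [hi di] := hY i; have [hj dj] := hY j.
  have hm := poly_comb hi hj (ltac:(lra) : 0 <= 2^-1 :> R) (ltac:(lra) : 2^-1 <= 1 :> R).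
  have := D2le _ hm.
  have e1 : x - ((1 - 2^-1) *: Y i + 2^-1 *: Y j) = 2^-1 *: ((x - Y i) + (x - Y j)).
    by apply/rowP => c; rewrite !mxE; field.
  have e2 : Y i - Y j = (x - Y j) - (x - Y i).
    by apply/rowP => c; rewrite !mxE; ring.
  rewrite e1 e2; move: di dj; move: (x - Y i) (x - Y j) => u w di dj h.
  rewrite !(dotDl, dotDr, dotNl, dotNr, dotZl, dotZr) (dotC w u) in h *.
  move: (dot u u) (dot w w) (dot u w) di dj h => A B C di dj h; nra.
have coordY : forall i j c, `|Y i 0 c - Y j 0 c| <= r i + r j.
  move=> i j c; apply: abs_le_sq; first by apply: addr_ge0; apply: ltW.
  have := coord_sq_le (Y i - Y j) c; rewrite !mxE => h.
  have := par i j; have := r0 i; have := r0 j; nra.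
pose P : vec := \row_c sup [set Y i 0 c - r i | i in [set: nat]].
have Pb : forall j c, `|P 0 c - Y j 0 c| <= r j.
  move=> j c; rewrite mxE.
  have ub : ubound [set Y i 0 c - r i | i in [set: nat]] (Y j 0 c + r j).
    move=> _ [i _ <-]; have := coordY i j c; rewrite ler_norml => /andP [_ h]; lra.
  have ne : [set Y i 0 c - r i | i in [set: nat]] !=set0 by exists (Y j 0 c - r j); exists j.
  have h1 := ge_sup ne ub.
  have h2 : Y j 0 c - r j <= sup [set Y i 0 c - r i | i in [set: nat]].
    by apply: ub_le_sup; [exists (Y j 0 c + r j) | exists j].
  rewrite ler_norml; apply/andP; split; lra.
have PX : X P.
  move=> i; rewrite /halfspace /=.
  apply: (@arch_le0 _ (\sum_c `|a i 0 c|)); first by apply: sumr_ge0 => c _.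
  move=> j; have := (hY j).1 i; rewrite /halfspace /= => hj.
  have := dot_bound (a i) (v := P - Y j) (rho := r j).
  have hb : forall c, `|(P - Y j) 0 c| <= r j.
    by move=> c; have := Pb j c; rewrite !mxE.
  rewrite dotBr => /(_ hb) h.
  rewrite -/(r j); move: (dot (a i) P) (dot (a i) (Y j)) h hj => A B h hj.
  rewrite mulrC; lra.
exists P; split => // y hy.
apply: vnorm_le; apply: le_trans (D2le _ hy).
rewrite -subr_le0.
pose K2 := D2 + 1.
have hK2 : forall j c, `|x 0 c - Y j 0 c| <= K2.
  move=> j c; apply: abs_le_sq; first by rewrite /K2; lra.
  have := coord_sq_le (x - Y j) c; rewrite !mxE => h.
  have := (hY j).2; have := r1 j; have := r0 j; rewrite /K2; nra.
apply: (@arch_le0 _ (2^-1 + 2 * (K2 * n%:R) + n%:R)).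
  have K20 : 0 <= K2 by rewrite /K2; lra.
  have n0 : 0 <= n%:R :> R by [].
  have : 0 <= K2 * n%:R by apply: mulr_ge0.
  lra.
move=> j; rewrite -/(r j).
have e : x - P = (x - Y j) + (Y j - P) by rewrite addrA subrK.
have b1 : dot (x - Y j) (Y j - P) <= r j * (K2 * n%:R).
  apply: le_trans (dot_bound _ (rho := r j) _) _.
    by move=> c; have := Pb j c; rewrite !mxE -normrN opprB.
  apply: ler_wpM2l; first exact: ltW.
  have hs : \sum_c `|(x - Y j) 0 c| <= \sum_(c < n) K2.
    by apply: ler_sum => c _; have := hK2 j c; rewrite !mxE.
  apply: le_trans hs _.
  by rewrite sumr_const card_ord mulr_natr.
have b2 : dot (Y j - P) (Y j - P) <= r j * (r j * n%:R).
  apply: le_trans (dot_bound _ (rho := r j) _) _.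
    by move=> c; have := Pb j c; rewrite !mxE -normrN opprB.
  apply: ler_wpM2l; first exact: ltW.
  have hs : \sum_c `|(Y j - P) 0 c| <= \sum_(c < n) r j.
    by apply: ler_sum => c _; have := Pb j c; rewrite !mxE -normrN opprB.
  apply: le_trans hs _.
  by rewrite sumr_const card_ord mulr_natr.
have b3 := (hY j).2.
have := r0 j; have := r1 j.
have n0 : 0 <= n%:R :> R by [].
have K20 : 0 <= K2 by rewrite /K2; lra.
rewrite e; move: b1 b2 b3; move: (x - Y j) (Y j - P) => u w b1 b2 b3.
rewrite dotDl !dotDr (dotC w u).
move: (r j) (dot u u) (dot u w) (dot w w) b1 b2 b3.
move=> rr A B C b1 b2 b3 h1 h0.
have s1 : rr ^+ 2 <= rr by nra.
have s2 : rr * (rr * n%:R) <= rr * n%:R.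
  by rewrite mulrA -expr2; apply: ler_wpM2r.
clearbody K2; lra.
Qed.
End Proj.

Section Final.
Variables (R : realType) (n : nat).
Notation vec := 'rV[R]_n.
Implicit Types (x y z w : vec).

Lemma sq_le (p q : R) : 0 <= p -> p <= q -> p ^+ 2 <= q ^+ 2.
Proof. move=> p0 pq; nra. Qed.

Lemma expand_step (w G : vec) (t : R) :
  dot (w - t *: G) (w - t *: G) = dot w w - 2 * t * dot G w + t ^+ 2 * dot G G.
Proof.
rewrite !(dotBl, dotBr, dotZl, dotZr) (dotC w G).
by move: (dot w w) (dot G G) (dot G w) => A1 A2 A3; ring.
Qed.

Lemma vnorm0 : vnorm (0 : vec) = 0.
Proof. by rewrite /vnorm dot0l sqrtr0. Qed.

Lemma vnorm_sub_tri x y : vnorm x <= vnorm (x - y) + vnorm y.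
Proof. by have := vnorm_triangle (x - y) y; rewrite subrK. Qed.

Lemma dist_half x (a0 : vec) (b0 : R) : a0 != 0 ->
  (dot a0 x - b0 <= 0 -> dist x (halfspace a0 b0) <= 0) /\
  (0 < dot a0 x - b0 -> dist x (halfspace a0 b0) <= (dot a0 x - b0) / vnorm a0).
Proof.
move=> a00; have na := vnorm_gt0 a00.
have lb : has_lbound [set vnorm (x - y) | y in halfspace a0 b0].
  by exists 0 => _ [y _ <-]; apply: vnorm_ge0.
split => hr.
  apply: ge_inf => //; exists x; first by [].
  by rewrite subrr vnorm0.
apply: ge_inf => //; exists (x - ((dot a0 x - b0) / dot a0 a0) *: a0).
  rewrite /halfspace /= dotBr dotZr divfK.
    by move: (dot a0 x) => A; lra.
  by rewrite -vnorm_sq sqrf_eq0 gt_eqF.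
rewrite opprB addrC subrK vnormZ ger0_norm; last first.
  by rewrite divr_ge0 ?dot_ge0 // ltW.
rewrite -vnorm_sq; field; rewrite gt_eqF //.
Qed.

Lemma pd_facts (dl r : R) : 0 < dl ->
  [/\ 0 <= pdelta' dl r, pdelta' dl r <= 1,
      (r <= 0 -> - (pdelta' dl r * r) <= dl / 4) &
      (0 < r -> r - pdelta' dl r * r <= dl / 4)].
Proof.
move=> d0; rewrite /pdelta'.
case: ifPn => h1.
  by split => // h; lra.
rewrite -leNgt in h1.
case: ifPn => h2.
  by split => // h; lra.
rewrite -leNgt in h2.
have hp : (r + dl) / (2 * dl) * (2 * dl) = r + dl by rewrite divfK // mulf_neq0 // gt_eqF.
move: ((r + dl) / (2 * dl)) hp => p hp.
have p0 : 0 <= p by nra.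
have p1 : p <= 1 by nra.
by split => // h; nra.
Qed.

End Final.

Section Final2.
Variables (R : realType) (n m : nat) (a : 'I_m -> 'rV[R]_n) (b : 'I_m -> R).
Notation vec := 'rV[R]_n.
Notation X := (polyhedron a b).
Implicit Types (x y z w : vec).
Hypothesis Xne : exists x0, X x0.

Lemma proj_spec x : X (proj X x) /\ forall y, X y -> vnorm (x - proj X x) <= vnorm (x - y).
Proof. exact: (@xgetPex _ 0 [set p | X p /\ forall y, X y -> vnorm (x - p) <= vnorm (x - y)] (proj_exists x Xne)). Qed.

Lemma proj_dist x : vnorm (x - proj X x) <= dist x X.
Proof.
have [PX Pmin] := proj_spec x.
apply: lb_le_inf; first by exists (vnorm (x - proj X x)); exists (proj X x).
by move=> _ [y hy <-]; apply: Pmin.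
Qed.

Lemma proj_nonexp x xs : X xs -> vnorm (proj X x - xs) <= vnorm (x - xs).
Proof.
move=> hxs; have [PX Pmin] := proj_spec x.
move: PX Pmin; move: (proj X x) => P PX Pmin.
have key : forall t, 0 < t -> t <= 1 ->
    2 * dot (x - P) (xs - P) <= t * dot (xs - P) (xs - P).
  move=> t t0 t1; have hy := poly_comb PX hxs (ltW t0) t1.
  have h := sq_le (vnorm_ge0 _) (Pmin _ hy).
  have e : x - ((1 - t) *: P + t *: xs) = (x - P) - t *: (xs - P).
    by apply/rowP => j; rewrite !mxE; ring.
  rewrite !vnorm_sq e in h.
  move: h; move: (x - P) (xs - P) => u d h.
  rewrite !(dotBl, dotBr, dotZl, dotZr) (dotC d u) in h.
  move: (dot u u) (dot u d) (dot d d) h => A C Q h; nra.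
have e1 : x - xs = (x - P) - (xs - P) by apply/rowP => j; rewrite !mxE; ring.
have e2 : P - xs = - (xs - P) by rewrite opprB.
apply: vnorm_le; rewrite e1 e2.
move: key (dot_ge0 (x - P)) (dot_ge0 (xs - P)); move: (x - P) (xs - P) => u d key A0 Q0.
rewrite !(dotBl, dotBr, dotNl, dotNr) (dotC d u).
move: key A0 Q0; move: (dot u u) (dot u d) (dot d d) => A c Q key A0 Q0.
have c0 : c <= 0.
  rewrite leNgt; apply/negP => cpos.
  have t0 : 0 < c / (c + Q) by rewrite divr_gt0 //; lra.
  have t1 : c / (c + Q) <= 1 by rewrite ler_pdivrMr; lra.
  have := key _ t0 t1.
  have -> : c / (c + Q) * Q = c * (Q / (c + Q)) by rewrite mulrAC mulrA.
  have : Q / (c + Q) <= 1 by rewrite ler_pdivrMr; lra.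
  move: (Q / (c + Q)) => u' hu; nra.
lra.
Qed.

Lemma alpha_props : (0 < m)%N -> (forall i, a i != 0) ->
  0 < alpha_min a /\ forall i, alpha_min a <= vnorm (a i).
Proof.
move=> m0 ha.
pose L := (\sum_i (vnorm (a i))^-1)^-1.
have hpos : forall i, 0 < vnorm (a i) by move=> i; apply: vnorm_gt0.
have hle : forall i, (vnorm (a i))^-1 <= \sum_i (vnorm (a i))^-1.
  move=> i; rewrite (bigD1 i) //= lerDl; apply: sumr_ge0 => j _.
  by rewrite invr_ge0 ltW.
have Spos : 0 < \sum_i (vnorm (a i))^-1.
  by apply: lt_le_trans (hle (Ordinal m0)); rewrite invr_gt0.
have L0 : 0 < L by rewrite invr_gt0.
have hL : forall i, L <= vnorm (a i).
  move=> i; rewrite /L -[X in _ <= X]invrK lef_pV2 ?posrE ?invr_gt0 //.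
have lb : has_lbound [set vnorm (a i) | i in [set: 'I_m]].
  by exists 0 => _ [i _ <-]; apply: vnorm_ge0.
split; last by move=> i; apply: ge_inf => //; exists i.
apply: lt_le_trans L0 _; apply: lb_le_inf.
  by exists (vnorm (a (Ordinal m0))); exists (Ordinal m0).
by move=> _ [i _ <-].
Qed.
End Final2.

Lemma bounded_below (R : realType) (n : nat) (f : 'rV[R]_n -> R) :
  convex_fun f -> bounded_level_sets f -> exists L, forall y, L <= f y.
Proof.
move=> fc fb.
have [v [hv _]] := subgrad_exists fc 0 0.
have [r hr] := fb (f 0).
have r0 : 0 <= r by apply: le_trans (hr 0 (lexx _)); rewrite vnorm0.
exists (f 0 - vnorm v * r) => y.
have vr : 0 <= vnorm v * r by rewrite mulr_ge0 ?vnorm_ge0.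
have [hy|hy] := lerP (f y) (f 0); last by lra.
have := hv y; rewrite subr0 => h1.
have := cauchy_schwarz (- v) y; rewrite dotNl vnormN => h2.
have h3 : vnorm v * vnorm y <= vnorm v * r by apply: ler_wpM2l; [apply: vnorm_ge0 | apply: hr].
move: (dot v y) (vnorm v * vnorm y) h1 h2 h3 => A B h1 h2 h3; lra.
Qed.

Unset Implicit Arguments.

Theorem lemma9 (R : realType) (n m : nat) (a : 'I_m -> 'rV[R]_n) (b : 'I_m -> R)
  (f : 'rV[R]_n -> R) (M1 M2 B rho : R)
  (gamma delta s : nat -> R) (x g : nat -> 'rV[R]_n) (idx : nat -> 'I_m) :
  (0 < m)%N ->
  (forall i, a i != 0) ->
  (exists x0, polyhedron a b x0) ->
  convex_fun f -> bounded_level_sets f ->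
  0 < M1 -> 0 < M2 ->
  (forall y v, subdiff f y v -> vnorm v <= M1 * vnorm y + M2) ->
  (forall k, 0 < gamma k) -> (forall k, 0 < delta k) -> (forall k, 0 < s k) ->
  0 < B ->
  (forall xs, Xstar f (polyhedron a b) xs ->
     vnorm xs <= B /\ forall v, subdiff f xs v -> vnorm v <= B) ->
  0 <= rho -> rho <= 1 ->
  (forall k, (1 <= k)%N -> subdiff f (x k) (g k)) ->
  (forall k, (1 <= k)%N ->
     x k.+1 = x k - s k *: (g k + gamma k *: grad_h (delta k) (a (idx k)) (b (idx k)) (x k))) ->
  forall xs, Xstar f (polyhedron a b) xs -> forall k, (1 <= k)%N ->
  let X := polyhedron a b in
  let dk := dist (x k) X in
  vnorm (x k.+1 - xs) ^+ 2 <=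
    (1 + 4 * s k ^+ 2 * M1 ^+ 2) * vnorm (x k - xs) ^+ 2
    + 2 * s k * ((1 - rho) * B + rho * (M1 * B + M2)) * dk
    + 2 * s k * rho * (fstar f X - f (proj X (x k)))
    + 2 * s k * rho * M1 * vnorm (x k - xs) * dk
    + s k * gamma k * delta k / (2 * alpha_min a)
    - 2 * s k * gamma k * dist (x k) (halfspace (a (idx k)) (b (idx k)))
    + 4 * s k ^+ 2 * (M1 ^+ 2 * B ^+ 2 + M2 ^+ 2 + gamma k ^+ 2).
Proof.
move=> m0 ha Xne fc fbl M10 M20 hsub hgam hdel hs B0 hXs rho0 rho1 hg hrec xs hxs k k1; cbv zeta.
have [hxsX hfxs] := hxs.
have [hxsB hvB] := hXs xs hxs.
have hmin : forall y, polyhedron a b y -> f xs <= f y.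
  move=> y hy; have [L hL] := bounded_below fc fbl.
  rewrite hfxs; apply: ge_inf; last by exists y.
  by exists L => _ [z _ <-]; apply: hL.
have [PX _] := proj_spec Xne (x k).
have hPD := proj_dist Xne (x k).
have hPne := proj_nonexp Xne (x k) hxsX.
move: PX hPD hPne; move: (proj (polyhedron a b) (x k)) => P PX hPD hPne.
have D0 : 0 <= dist (x k) (polyhedron a b) by apply: le_trans hPD; apply: vnorm_ge0.
have F3 : - (B * dist (x k) (polyhedron a b)) <= f (x k) - f xs.
  have q1 : dd f xs (x k - xs) <= f (x k) - f xs.
    by have := dd_le1 fc xs (x k - xs); rewrite [xs + _]addrC subrK.
  have e : (x k - xs) + (P - x k) = P - xs by apply/rowP => j; rewrite !mxE; ring.
  have qsub := (dd_sublin fc xs).1 (x k - xs) (P - x k); rewrite e in qsub.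
  have qP : 0 <= dd f xs (P - xs).
    apply: dd_ge => t t0.
    have tm : 0 < Num.min t 1 by rewrite lt_min t0 ltr01.
    apply: le_trans (Qd_mono fc _ _ tm (_ : Num.min t 1 <= t)); last by rewrite ge_min lexx.
    rewrite /Qd; apply: divr_ge0; last exact: ltW.
    rewrite subr_ge0; apply: hmin.
    have e2 : xs + Num.min t 1 *: (P - xs) = (1 - Num.min t 1) *: xs + Num.min t 1 *: P.
      by apply/rowP => j; rewrite !mxE; ring.
    rewrite e2; apply: poly_comb => //; first exact: ltW.
    by rewrite ge_min lexx orbT.
  have [v [hv hvw]] := subgrad_exists fc xs (P - x k).
  have vB := hvB v hv.
  have cs := cauchy_schwarz v (P - x k).
  have cs2 : vnorm v * vnorm (P - x k) <= B * dist (x k) (polyhedron a b).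
    apply: ler_pM; rewrite ?vnorm_ge0 //; by rewrite vnormB.
  move: (dd f xs (x k - xs)) (dd f xs (P - x k)) (dd f xs (P - xs)) q1 qsub qP hvw.
  move: (dot v (P - x k)) (vnorm v * vnorm (P - x k)) cs cs2.
  move=> A1 A2 cs cs2 q1 q2 q3 h1 h2 h3 h4; lra.
pose U := M1 * (vnorm (x k - xs) + B) + M2.
have F4 : f P - U * dist (x k) (polyhedron a b) <= f (x k).
  have [u [hu _]] := subgrad_exists fc P 0.
  have h1 := hu (x k).
  have cs := cauchy_schwarz (- u) (x k - P); rewrite dotNl vnormN in cs.
  have hun := hsub P u hu.
  have hP : vnorm P <= vnorm (x k - xs) + B.
    have := vnorm_sub_tri P xs; lra.
  have uU : vnorm u <= U.
    apply: le_trans hun _; rewrite /U lerD2r; apply: ler_wpM2l; first exact: ltW.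
    exact: hP.
  have cs2 : vnorm u * vnorm (x k - P) <= U * dist (x k) (polyhedron a b).
    by apply: ler_pM; rewrite ?vnorm_ge0.
  move: (dot u (x k - P)) (vnorm u * vnorm (x k - P)) h1 cs cs2 => A1 A2 h1 cs cs2; lra.
have F2 : f (x k) - f xs <= dot (g k) (x k - xs).
  have := hg k k1 xs; rewrite -[xs - x k]opprB dotNr.
  move: (dot (g k) (x k - xs)) => A h; lra.
have [al0 alle] := alpha_props m0 ha.
set i := idx k.
have na := vnorm_gt0 (ha i).
have [pd0 pd1 pdn pdp] := pd_facts (dot (a i) (x k) - b i) (hdel k).
have [dh1 dh2] := dist_half (x k) (b i) (ha i).
have hxsi : dot (a i) xs - b i <= 0 := hxsX i.
have T2e : dot (grad_h (delta k) (a i) (b i) (x k)) (x k - xs) =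
    ((vnorm (a i))^-1 * pdelta' (delta k) (dot (a i) (x k) - b i)) * (dot (a i) (x k) - dot (a i) xs).
  by rewrite /grad_h dotZl dotBr.
have F5 : 2 * dist (x k) (halfspace (a i) (b i)) - 2 * dot (grad_h (delta k) (a i) (b i) (x k)) (x k - xs)
    <= delta k * (2 * alpha_min a)^-1.
  have hinv : (2 * vnorm (a i))^-1 <= (2 * alpha_min a)^-1.
    rewrite lef_pV2 ?posrE ?mulr_gt0 //; rewrite ler_pM2l //; exact: alle.
  have hinv2 : delta k * (2 * vnorm (a i))^-1 <= delta k * (2 * alpha_min a)^-1.
    by apply: ler_wpM2l => //; apply: ltW.
  apply: le_trans hinv2; rewrite T2e.
  have ee : (2 * vnorm (a i))^-1 = 2^-1 * (vnorm (a i))^-1 by rewrite invfM.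
  rewrite ee.
  have ni0 : 0 < (vnorm (a i))^-1 by rewrite invr_gt0.
  move: dh1 dh2 pdn pdp pd0 pd1 hxsi; rewrite -[_ / vnorm (a i)]mulrC.
  move: (dist (x k) (halfspace (a i) (b i))) ((vnorm (a i))^-1) ni0 => Di ni ni0.
  move: (pdelta' (delta k) (dot (a i) (x k) - b i)) => p.
  move: (dot (a i) (x k)) (dot (a i) xs) (b i) (delta k) (hdel k) => A C bb dl dl0.
  move=> dh1 dh2 pdn pdp pd0 pd1 hxsi.
  have hT : ni * p * (A - bb) <= ni * p * (A - C).
    apply: ler_wpM2l; [by apply: mulr_ge0; [apply: ltW|] | lra].
  have [hr|hr] := lerP (A - bb) 0.
    have h1 := dh1 hr; have h2 := pdn hr.
    have h3 : ni * (- (p * (A - bb))) <= ni * (dl / 4) by apply: ler_wpM2l; [apply: ltW|].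
    nra.
  have h1 := dh2 hr; have h2 := pdp hr.
  have h3 : ni * (A - bb - p * (A - bb)) <= ni * (dl / 4) by apply: ler_wpM2l; [apply: ltW|].
  nra.
pose h := grad_h (delta k) (a i) (b i) (x k).
pose G := g k + gamma k *: h.
have hh1 : vnorm h <= 1.
  rewrite /h /grad_h vnormZ ger0_norm; last by apply: mulr_ge0; [rewrite invr_ge0 ltW|].
  by rewrite mulrAC mulVf ?gt_eqF // mul1r.
have hgn : vnorm (g k) <= U.
  apply: le_trans (hsub _ _ (hg k k1)) _; rewrite /U lerD2r; apply: ler_wpM2l; first exact: ltW.
  by have := vnorm_sub_tri (x k) xs; lra.
have hG : vnorm G <= U + gamma k.
  apply: le_trans (vnorm_triangle _ _) _; rewrite vnormZ ger0_norm; last exact: ltW.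
  have : gamma k * vnorm h <= gamma k * 1 by apply: ler_wpM2l => //; apply: ltW.
  lra.
have F6 : dot G G <= (U + gamma k) ^+ 2.
  by rewrite -vnorm_sq; apply: sq_le => //; apply: vnorm_ge0.
have ex : vnorm (x k.+1 - xs) ^+ 2 = vnorm (x k - xs) ^+ 2 - 2 * s k * (dot (g k) (x k - xs) + gamma k * dot h (x k - xs)) + s k ^+ 2 * dot G G.
  rewrite hrec // -/h -/G.
  have e : x k - s k *: G - xs = (x k - xs) - s k *: G by apply/rowP => j; rewrite !mxE; ring.
  rewrite e !vnorm_sq.
  have e2 : dot G (x k - xs) = dot (g k) (x k - xs) + gamma k * dot h (x k - xs).
    by rewrite /G dotDl dotZl.
  by rewrite expand_step e2.
rewrite ex.
have U0 : 0 <= U by apply: le_trans hgn; apply: vnorm_ge0.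
have rho1' : 0 <= 1 - rho by lra.
have p1 : 0 <= (1 - rho) * (f (x k) - fstar f (polyhedron a b) + B * dist (x k) (polyhedron a b)).
  by apply: mulr_ge0 => //; rewrite -hfxs; lra.
have p2 : 0 <= rho * (f (x k) - f P + U * dist (x k) (polyhedron a b)).
  by apply: mulr_ge0 => //; lra.
rewrite -hfxs in p1 *.
have sp : 0 <= 2 * s k by apply: mulr_ge0 => //; apply: ltW.
have sg : 0 <= s k * gamma k by apply: mulr_ge0; apply: ltW.
have E2 := ler_wpM2l sg F5.
have F7 : (U + gamma k) ^+ 2 <= 4 * (M1 ^+ 2 * vnorm (x k - xs) ^+ 2 + (M1 ^+ 2 * B ^+ 2 + M2 ^+ 2 + gamma k ^+ 2)).
  rewrite /U; move: (vnorm (x k - xs)) (gamma k) => d gm.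
  have := sqr_ge0 (M1 * d - M1 * B); have := sqr_ge0 (M1 * d - M2); have := sqr_ge0 (M1 * d - gm).
  have := sqr_ge0 (M1 * B - M2); have := sqr_ge0 (M1 * B - gm); have := sqr_ge0 (M2 - gm).
  nra.
have ss : 0 <= s k ^+ 2 by apply: sqr_ge0.
have E3 := ler_wpM2l ss (le_trans F6 F7).
have E1 : - dot (g k) (x k - xs) <= (1 - rho) * B * dist (x k) (polyhedron a b)
    + rho * (M1 * B + M2) * dist (x k) (polyhedron a b) + rho * (f xs - f P)
    + rho * M1 * vnorm (x k - xs) * dist (x k) (polyhedron a b).
  move: p1 p2 F2; rewrite /U.
  move: (dot (g k) (x k - xs)) (dist (x k) (polyhedron a b)) (f (x k)) (f xs) (f P) (vnorm (x k - xs)).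
  move=> T1 D fx fs fP d p1 p2 F2; nra.
have E1' := ler_wpM2l sp E1.
move: E1' E2 E3.
move: (dot (g k) (x k - xs)) (dot h (x k - xs)) (dot G G) (dist (x k) (polyhedron a b))
  (dist (x k) (halfspace (a i) (b i))) (vnorm (x k - xs)) (f xs) (f P) ((2 * alpha_min a)^-1).
move=> T1 T2 GG D Di d fs fP ia Z1 Z2 Z3.
move: (s k) (gamma k) (delta k) Z1 Z2 Z3 => sk gk dk Z1 Z2 Z3.
nra.
Qed.
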